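(* Let $n\ge 3$, let $r_1,\ldots,r_n$ be indeterminates over $\mathbb{Q}$, and let $f=\prod_{i=1}^n(x-r_i)=x^n+a_{n-1}x^{n-1}+\cdots+a_0$. Let \[f_1(x,y)=\frac{f(y)-f(x)}{y-x},\qquad f_3(x,y)=\frac{f(y)-2f\left(\frac{x+y}{2}\right)+f(x)}{\frac{(y-x)^2}{2}},\] and $F(x)=\operatorname{res}(f_1,f_3,y)$. Then for any $k,j\in\{2,\ldots,n\}$ with $k\ne j$, the polynomial $r_1-2r_k+r_j$ divides $F(r_1)$ in $\mathbb{Q}[r_1,\ldots,r_n]$.
   Context: $\operatorname{res}(\cdot,\cdot,y)$ is the Sylvester resultant with respect to $y$; $F(r_1)$ is $F$ with $x$ replaced by $r_1$, viewed as a polynomial in $r_1,\ldots,r_n$. *)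

(* Defs.v *)
From HB Require Import structures.
From mathcomp Require Import all_boot all_order all_algebra.
From mathcomp Require Import mpoly.
Set Implicit Arguments. Unset Strict Implicit. Unset Printing Implicit Defensive.
Import Order.TTheory GRing.Theory Num.Theory.
Local Open Scope ring_scope.

(* Base ring Q[r_1,...,r_n]; r_(i+1) is the multivariate variable 'X_i, i : 'I_n. *)
Notation Qr n := {mpoly rat[n]}.

Definition fpoly (n : nat) : {poly Qr n} := \prod_(i < n) ('X - ('X_i)%:P).

(* Bivariate polynomials in x,y over Q[r]: outer variable is y, inner is x,
   i.e. elements of {poly {poly Qr n}} (coefficients in y are polys in x). *)
Definition xvar (n : nat) : {poly {poly Qr n}} := ('X : {poly Qr n})%:P.
Definition yvar (n : nat) : {poly {poly Qr n}} := 'X.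

Definition f_y (n : nat) : {poly {poly Qr n}} := (fpoly n) ^:P.
Definition f_x (n : nat) : {poly {poly Qr n}} := (fpoly n)%:P.
Definition f_mid (n : nat) : {poly {poly Qr n}} :=
  (fpoly n) ^:P \Po (((((2%:R)^-1 : rat)%:MP_[n])%:P)%:P * (xvar n + yvar n)).

Definition f1 (n : nat) : {poly {poly Qr n}} :=
  (f_y n - f_x n) %/ (yvar n - xvar n).

(* f3 = (f(y) - 2 f((x+y)/2) + f(x)) / ((y-x)^2 / 2)
      = 2 (f(y) - 2 f((x+y)/2) + f(x)) / (y-x)^2  (exact division) *)
Definition f3 (n : nat) : {poly {poly Qr n}} :=
  (2%:R * (f_y n - 2%:R * f_mid n + f_x n)) %/ ((yvar n - xvar n) ^+ 2).

Definition Fres (n : nat) : {poly Qr n} := resultant (f1 n) (f3 n).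

(* Main.v *)
Require Import Defs.
From HB Require Import structures.
From mathcomp Require Import all_boot all_order all_algebra.
From mathcomp Require Import mpoly.
From mathcomp Require Import ring zify.
Import Order.TTheory GRing.Theory Num.Theory.
Local Open Scope ring_scope.


Section Div.
Variables (n : nat) (t : n.-tuple {mpoly rat[n]}) (p : {mpoly rat[n]}).
Definition Dv (a : {mpoly rat[n]}) := exists q, a = p * q.
Hypothesis ht : forall i : 'I_n, Dv ('X_i - tnth t i).

Lemma Dv_add a b : Dv a -> Dv b -> Dv (a + b).
Proof. by move=> [qa ->] [qb ->]; exists (qa + qb); rewrite mulrDr. Qed.
Lemma Dv_mul a1 b1 a2 b2 : Dv (a1 - b1) -> Dv (a2 - b2) -> Dv (a1 * a2 - b1 * b2).
Proof.
move=> [q1 h1] [q2 h2]; exists (q1 * a2 + b1 * q2).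
have -> : a1 * a2 - b1 * b2 = (a1 - b1) * a2 + b1 * (a2 - b2) by ring.
by rewrite h1 h2; ring.
Qed.

Lemma Dv_comp (P : {mpoly rat[n]}) : Dv (P - (P \mPo t)).
Proof.
have -> : P - (P \mPo t) = \sum_(m <- msupp P) (P@_m *: 'X_[m] - P@_m *: ('X_[m] \mPo t)).
  by rewrite sumrB (comp_mpolyEX P t) -(mpolyE P).
apply: (big_ind Dv); [by exists 0; rewrite mulr0 | exact: Dv_add|].
move=> m _; rewrite -scalerBr comp_mpolyX mpolyXE_id.
have : Dv (\prod_(i < n) 'X_i ^+ m i - \prod_(i < n) tnth t i ^+ m i).
  apply: (big_ind2 (fun a b => Dv (a - b))); first by exists 0; rewrite subrr mulr0.
    by move=> *; exact: Dv_mul.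
  move=> i _; elim: (m i) => [|e IH]; first by exists 0; rewrite !expr0 subrr mulr0.
  by rewrite !exprS; apply: Dv_mul.
by move=> [q ->]; exists (P@_m *: q); rewrite scalerAr.
Qed.
End Div.


Lemma rem_zero (R : idomainType) (p q r d : {poly R}) (x : R) :
  p = q * d ^+ 2 + r -> (size r <= 2)%N -> d.[x] = 0 -> p.[x] = 0 ->
  (p^`()).[x] = 0 -> r = 0.
Proof.
move=> E szr dX hp hp'.
have r1 : r`_1 = 0.
  move: hp'; rewrite E expr2 !(derivD, derivM) !(hornerD, hornerM) dX !mulr0 !mul0r !add0r.
  have szr' : (size r^`() <= 1)%N.
    by rewrite /deriv (leq_trans (size_poly _ _)) // -subn1 leq_subLR.
  rewrite (size1_polyC szr') hornerC coef_deriv.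
  by rewrite mulr0 add0r mulr1n.
have r0 : r`_0 = 0.
  move: hp; rewrite E expr2 !(hornerD, hornerM) dX !mulr0 add0r.
  rewrite (horner_coef_wide _ szr) !big_ord_recr big_ord0 /= r1 mul0r addr0 add0r.
  by rewrite expr0 mulr1.
apply/polyP => i; rewrite coef0; case: i => [|[|i]] //.
by rewrite nth_default // (leq_trans szr).
Qed.

Section Exact.
Variable n : nat.
Local Notation Q := {mpoly rat[n]}.

Lemma hornerXP (p : {poly Q}) : (p ^:P).['X] = p.
Proof.
elim/poly_ind: p => [|p a IH]; first by rewrite rmorph0 horner0.
by rewrite rmorphD rmorphM /= map_polyX map_polyC /= !hornerE IH.
Qed.

Lemma dmonic : (yvar n - xvar n) \is monic.
Proof. exact: monicXsubC. Qed.

Lemma half2 : (((2%:R)^-1 : rat)%:MP_[n])%:P * 2%:R = 1 :> {poly Q}.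
Proof.
have -> : (2%:R : {poly Q}) = ((2%:R : rat)%:MP)%:P by rewrite mpolyC_nat polyC_natr.
by rewrite -polyCM -mpolyCM mulVf.
Qed.

Lemma f1_exact : f_y n - f_x n = f1 n * (yvar n - xvar n).
Proof.
set d := yvar n - xvar n; set p := f_y n - f_x n.
have E := Pdiv.IdomainMonic.divp_eq dmonic p.
rewrite /f1 -/p -/d.
set r := p %% d in E *.
have szr : (size r <= 1)%N.
  have := Pdiv.Idomain.ltn_modpN0 p (monic_neq0 dmonic).
  by rewrite size_XsubC.
have Er := size1_polyC szr.
have hp : p.['X] = 0 by rewrite /p /f_y /f_x !hornerE hornerXP subrr.
have r0 : r`_0 = 0.
  by move: hp; rewrite {1}E {1}Er !hornerE subrr mulr0 add0r.
by rewrite {1}E Er r0 addr0.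
Qed.

Local Notation c := ((((2%:R)^-1 : rat)%:MP_[n])%:P : {poly Q}).

Lemma half2X : c * ('X + 'X) = 'X.
Proof. by rewrite -[RHS]mul1r -half2 -mulrA mulr_natl mulr2n. Qed.

Lemma midX : (c%:P * (xvar n + yvar n)).['X] = 'X.
Proof. by rewrite /xvar /yvar !hornerE half2X. Qed.

Lemma derivXP (p : {poly Q}) : (p^:P)^`() = (p^`())^:P.
Proof. exact: deriv_map. Qed.

Lemma f3_exact : 2%:R * (f_y n - 2%:R * f_mid n + f_x n) = f3 n * (yvar n - xvar n) ^+ 2.
Proof.
set d := yvar n - xvar n; set p := 2%:R * (f_y n - 2%:R * f_mid n + f_x n).
have mon : d ^+ 2 \is monic by apply: monic_exp; exact: dmonic.
have E := Pdiv.IdomainMonic.divp_eq mon p.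
rewrite /f3 -/p -/d.
set r := p %% (d ^+ 2) in E *.
have szr : (size r <= 2)%N.
  have := Pdiv.Idomain.ltn_modpN0 p (monic_neq0 mon).
  by rewrite size_exp_XsubC.
have dX : d.['X] = 0 by rewrite /d /yvar /xvar !hornerE subrr.
have e1 : (f_y n).['X] = fpoly n by exact: hornerXP.
have e2 : (f_mid n).['X] = fpoly n by rewrite /f_mid horner_comp midX hornerXP.
have e3 : (f_x n).['X] = fpoly n by rewrite /f_x hornerC.
have z3 : forall a : {poly Q}, a - (a + a) + a + (a - (a + a) + a) = 0.
  by move=> a; ring.
have hp : p.['X] = 0.
  by rewrite /p !mulr_natl !(hornerD, hornerN, hornerMn) e1 e2 e3 z3.
have d1 : ((f_y n)^`()).['X] = (fpoly n)^`() by rewrite /f_y derivXP hornerXP.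
have d2 : ((f_mid n)^`()).['X] = (fpoly n)^`() * c.
  rewrite /f_mid deriv_comp derivXP hornerM horner_comp midX hornerXP; congr (_ * _).
  by rewrite mul_polyC derivZ derivD /xvar /yvar derivC derivX add0r hornerZ -polyC1 hornerC mulr1.
have d3 : ((f_x n)^`()).['X] = 0 by rewrite /f_x derivC horner0.
have hp' : (p^`()).['X] = 0.
  rewrite /p !mulr_natl !(derivMn, derivD, derivN) !(hornerD, hornerN, hornerMn) d1 d2 d3.
  have h : forall a : {poly Q}, a * c *+ 2 = a.
    by move=> a; rewrite -mulrnAr -mulr_natr half2 mulr1.
  by rewrite h subrr addr0 mul0rn.
have r0 : r = 0 by apply: (@rem_zero _ _ _ _ _ _ E szr dX hp hp').
by rewrite {1}E r0 addr0.
Qed.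
End Exact.


Section Maps.
Variables (n : nat) (S : comNzRingType) (s : {rmorphism {poly {mpoly rat[n]}} -> S}).
Local Notation Q := {mpoly rat[n]}.
Local Notation c := ((((2%:R)^-1 : rat)%:MP_[n])%:P : {poly Q}).

Lemma map_fy : map_poly s (f_y n) = map_poly (s \o polyC) (fpoly n).
Proof. by rewrite /f_y map_poly_comp. Qed.

Lemma map_fx : map_poly s (f_x n) = (s (fpoly n))%:P.
Proof. by rewrite /f_x map_polyC. Qed.

Lemma map_fmid : map_poly s (f_mid n) =
  map_poly (s \o polyC) (fpoly n) \Po ((s c)%:P * ((s 'X)%:P + 'X)).
Proof.
rewrite /f_mid map_comp_poly -map_fy; congr (_ \Po _).
by rewrite rmorphM /= map_polyC rmorphD /= map_polyC map_polyX.
Qed.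

Lemma map_d : map_poly s (yvar n - xvar n) = 'X - (s 'X)%:P.
Proof. by rewrite rmorphB /= map_polyX map_polyC. Qed.

Lemma map_E1 : map_poly s (f_y n) - map_poly s (f_x n) =
  map_poly s (f1 n) * ('X - (s 'X)%:P).
Proof. by rewrite -map_d -rmorphM -f1_exact rmorphB. Qed.

Lemma map_E3 : 2%:R * (map_poly s (f_y n) - 2%:R * map_poly s (f_mid n) + map_poly s (f_x n)) =
  map_poly s (f3 n) * ('X - (s 'X)%:P) ^+ 2.
Proof.
rewrite -map_d -rmorphXn -rmorphM -f3_exact /=.
by rewrite rmorphM rmorph_nat rmorphD rmorphB rmorphM rmorph_nat.
Qed.
End Maps.

Lemma map_fpoly n (S : comNzRingType) (g : {rmorphism {mpoly rat[n]} -> S}) :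
  map_poly g (fpoly n) = \prod_(i < n) ('X - (g 'X_i)%:P).
Proof.
rewrite /fpoly rmorph_prod; apply: eq_bigr => i _.
by rewrite rmorphB /= map_polyX map_polyC.
Qed.

Definition rh n : {rmorphism {poly {mpoly rat[n]}} -> rat} :=
  (meval (fun _ : 'I_n => (0:rat))) \o (horner_eval (0 : {mpoly rat[n]})).

Lemma rhC n (a : {mpoly rat[n]}) : rh n a%:P = meval (fun _ => 0) a.
Proof. by rewrite /= /horner_eval hornerC. Qed.

Lemma rh_fy n : map_poly (rh n) (f_y n) = 'X ^+ n.
Proof.
rewrite map_fy (eq_map_poly (@rhC n)) map_fpoly /=.
under eq_bigr do rewrite mevalXU polyC0 subr0.
by rewrite prodr_const card_ord.
Qed.

Lemma rhX n : rh n 'X = 0.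
Proof. by rewrite /= /horner_eval hornerX meval0. Qed.

Lemma size_f1 n : (2 < n)%N -> (1 < size (f1 n))%N.
Proof.
move=> hn; rewrite ltnNge; apply/negP => h.
have E := @map_E1 n _ (rh n).
rewrite map_fx rh_fy (size1_polyC h) map_polyC rhX polyC0 subr0 in E.
move: E => /(congr1 (fun p : {poly rat} => p`_n)).
rewrite /= coefB coefXn eqxx coefC coefCM coefX.
have n0 : (n == 0)%N = false by move: hn; case: (n) => [|[|m]].
have n1 : (n == 1)%N = false by move: hn; case: (n) => [|[|m]].
by rewrite n0 n1 mulr0 subr0 => /eqP; rewrite oner_eq0.
Qed.

Lemma comp_Xn (R : comNzRingType) (q : {poly R}) m : 'X ^+ m \Po q = q ^+ m.
Proof.
elim: m => [|m IH]; first by rewrite !expr0 -polyC1 comp_polyC.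
by rewrite !exprS comp_polyM comp_polyX IH.
Qed.

Lemma half_pow n : (2 < n)%N -> (1 - ((2%:R : rat)^-1) ^+ n *+ 2) *+ 2 != 0.
Proof.
move=> hn; rewrite mulrn_eq0 /= subr_eq0; apply/eqP => H.
move: (congr1 (fun x : rat => 2%:R ^+ n * x) H).
rewrite /= mulr1 exprVn mulrnAr mulfV ?expf_neq0 ?pnatr_eq0 // => H2.
have := H2; rewrite -natrX => /eqP; rewrite eqr_nat => /eqP.
case: n hn {H H2} => [|[|[|m]]] // _; rewrite !expnS => E.
have : (0 < 2 ^ m)%N by rewrite expn_gt0.
move: E; set x := (2 ^ m)%N => E. lia.
Qed.

Lemma size_f3 n : (2 < n)%N -> (1 < size (f3 n))%N.
Proof.
move=> hn; rewrite ltnNge; apply/negP => h.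
have E := @map_E3 n _ (rh n).
rewrite map_fmid -map_fy map_fx rh_fy (size1_polyC h) map_polyC rhX polyC0 subr0 add0r in E.
rewrite rhC mevalC comp_Xn exprMn -polyC_exp in E.
move: E => /(congr1 (fun p : {poly rat} => p`_n)).
have n0 : (n == 0)%N = false by move: hn; case: (n) => [|[|m]].
have n2 : (n == 2)%N = false by move: hn; case: (n) => [|[|[|m]]].
rewrite /= !mulr_natl coefMn coefD coefB coefMn coefXn eqxx coefC n0 coefCM coefXn eqxx coefCM coefXn n2.
rewrite addr0 mulr1 mulr0 => /eqP; apply/negP; exact: half_pow.
Qed.


Lemma eval_aux3 (R : comNzRingType) (A B C D e : {poly R}) x :
  2%:R * (A - 2%:R * B + C) = D * e -> A.[x] = 0 -> B.[x] = 0 -> C.[x] = 0 ->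
  D.[x] * e.[x] = 0.
Proof.
move=> E hA hB hC; rewrite -hornerM -E !mulr_natl !(hornerD, hornerN, hornerMn) hA hB hC.
by rewrite !(addr0, subr0).
Qed.

Theorem lemma4 (n : nat) (hn : (3 <= n)%N) (k j : 'I_n)
  (hk : (0 < k)%N) (hj : (0 < j)%N) (hkj : k != j) (i0 : 'I_n) (hi0 : val i0 = 0%N) :
  exists q : {mpoly rat[n]},
    (Fres n).['X_i0] = ('X_i0 - 2%:R * 'X_k + 'X_j) * q.
Proof.
pose y0 : {mpoly rat[n]} := 2%:R * 'X_k - 'X_i0.
pose t : n.-tuple {mpoly rat[n]} := [tuple if i == j then y0 else 'X_i | i < n].
pose th : {rmorphism {poly {mpoly rat[n]}} -> {mpoly rat[n]}} :=
  (comp_mpoly t) \o (horner_eval 'X_i0).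
have tX : forall i, 'X_i \mPo t = if i == j then y0 else 'X_i.
  by move=> i; rewrite comp_mpolyXU -tnth_nth tnth_mktuple.
have i0j : (i0 == j) = false.
  by apply/negbTE; apply/eqP => E; move: hj; rewrite -E hi0.
have i0k : (k != i0).
  by apply/eqP => E; move: hk; rewrite E hi0.
have thC : forall a, th a%:P = a \mPo t by move=> a; rewrite /= /horner_eval hornerC.
have thX : th 'X = 'X_i0 by rewrite /= /horner_eval hornerX tX i0j.
have f0 : (fpoly n).['X_i0] = 0.
  rewrite /fpoly horner_prod; apply/eqP/prodf_eq0; exists i0 => //.
  by rewrite hornerD hornerN hornerX hornerC subrr.
have thF : th (fpoly n) = 0.
  by change (comp_mpoly t ((fpoly n).['X_i0]) = 0); rewrite f0 rmorph0.
have mfy : map_poly th (f_y n) = \prod_(i < n) ('X - ('X_i \mPo t)%:P).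
  by rewrite map_fy (eq_map_poly thC) map_fpoly.
have fyy0 : (map_poly th (f_y n)).[y0] = 0.
  rewrite mfy horner_prod; apply/eqP/prodf_eq0; exists j => //.
  by rewrite tX eqxx hornerD hornerN hornerX hornerC subrr.
have fxy0 : (map_poly th (f_x n)).[y0] = 0 by rewrite map_fx thF hornerC.
have nz : y0 - 'X_i0 != 0.
  apply/eqP => /(congr1 (meval (fun i => (i == k)%:R))).
  rewrite /y0 !rmorphB rmorphM /= !mevalXU rmorph_nat eqxx (eq_sym i0 k) (negbTE i0k).
  by rewrite meval0 /= !subr0 mulr1n mulr1 => /eqP; rewrite pnatr_eq0.
have f1y0 : (map_poly th (f1 n)).[y0] = 0.
  move: (@map_E1 n _ th) => /(congr1 (fun P => P.[y0])).
  rewrite hornerD hornerN fyy0 fxy0 subrr hornerM hornerD hornerN hornerX hornerC thX => /esym/eqP.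
  by rewrite mulf_eq0 (negbTE nz) orbF => /eqP.
have mid : ((2%:R)^-1 : rat)%:MP_[n] * ('X_i0 + y0) = 'X_k.
  rewrite /y0 addrC subrK mulrA -mpolyC_nat -mpolyCM mulVf ?pnatr_eq0 //.
  by rewrite mul1r.
have fmy0 : (map_poly th (f_mid n)).[y0] = 0.
  rewrite map_fmid horner_comp -map_fy thC comp_mpolyC thX.
  rewrite hornerM hornerC hornerD hornerC hornerX mid.
  rewrite mfy horner_prod; apply/eqP/prodf_eq0; exists k => //.
  have kj : (k == j) = false by apply/negbTE.
  by rewrite tX kj hornerD hornerN hornerX hornerC subrr.
have f3y0 : (map_poly th (f3 n)).[y0] = 0.
  have := @eval_aux3 _ _ _ _ _ _ _ (@map_E3 n _ th) fyy0 fmy0 fxy0.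
  rewrite horner_exp hornerD hornerN hornerX hornerC thX => /eqP.
  by rewrite mulf_eq0 expf_eq0 (negbTE nz) andbF orbF => /eqP.
case: (resultant_in_ideal (@size_f1 n hn) (@size_f3 n hn)) => [[u v] _ /= R].
move: R => /(congr1 (fun P => (map_poly th P).[y0])).
rewrite map_polyC hornerC rmorphD !rmorphM hornerD !hornerM f1y0 f3y0 !mulr0 addr0 => Hth.
have ht : forall i : 'I_n, Dv n ('X_i0 - 2%:R * 'X_k + 'X_j) ('X_i - tnth t i).
  move=> i; rewrite tnth_mktuple; case: eqP => [->|_].
    by exists 1; rewrite mulr1 /y0 opprB addrC.
  by exists 0; rewrite subrr mulr0.
have [q Hq] := @Dv_comp n t _ ht ((Fres n).['X_i0]).
exists q; rewrite -Hq.
have thE : forall x, th x = x.['X_i0] \mPo t by [].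
move: Hth; rewrite -/(Fres n) => Hth.
have Hth2 : (Fres n).['X_i0] \mPo t = 0 := Hth.
by rewrite Hth2 subr0.
Qed.
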